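(* For every integer $n$, \[ 25\sum_{k=1}^n F_k^{\,4}=F_{2n+1}L_{n-1}L_{n+2}+6n+3\,. \]
   Context: $F_i$ and $L_i$ denote the Fibonacci and Lucas numbers, defined for all $i\in\mathbb{Z}$ by $F_i=F_{i-1}+F_{i-2}$, $F_0=0$, $F_1=1$, and $L_i=L_{i-1}+L_{i-2}$, $L_0=2$, $L_1=1$; equivalently $F_{-i}=(-1)^{i-1}F_i$ and $L_{-i}=(-1)^iL_i$. Summation convention for an arbitrary integer upper limit: $\sum_{k=a}^{a-1} f(k)=0$, and for $n<a-1$, $\sum_{k=a}^{n} f(k) = -\sum_{k=n+1}^{a-1} f(k)$. *)

(* Defs.v *)
From Stdlib Require Import ZArith List.
Open Scope Z_scope.

Fixpoint fibL_pair (n : nat) : Z * Z * Z * Z :=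
  (* returns (F_n, F_{n+1}, L_n, L_{n+1}) *)
  match n with
  | O => (0, 1, 2, 1)
  | S m => let '(f0, f1, l0, l1) := fibL_pair m in (f1, f0 + f1, l1, l0 + l1)
  end.

Definition fibN (n : nat) : Z := let '(f, _, _, _) := fibL_pair n in f.
Definition lucN (n : nat) : Z := let '(_, _, l, _) := fibL_pair n in l.

Definition F (i : Z) : Z :=
  if 0 <=? i then fibN (Z.to_nat i)
  else (-1) ^ (- i - 1) * fibN (Z.to_nat (- i)).
Definition L (i : Z) : Z :=
  if 0 <=? i then lucN (Z.to_nat i)
  else (-1) ^ (- i) * lucN (Z.to_nat (- i)).

Fixpoint sum_from (f : Z -> Z) (a : Z) (len : nat) : Z :=
  match len with
  | O => 0
  | S m => f a + sum_from f (a + 1) m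
  end.

(* sum_{k=a}^{n} f k with the convention: empty for n = a-1, and
   for n < a-1 it equals - sum_{k=n+1}^{a-1} f k. *)
Definition sumZ (a n : Z) (f : Z -> Z) : Z :=
  if a - 1 <=? n then sum_from f a (Z.to_nat (n - a + 1))
  else - sum_from f (n + 1) (Z.to_nat (a - 1 - n)).

(* Main.v *)
Require Import Defs.
From Stdlib Require Import ZArith Lia.
Open Scope Z_scope.

Lemma fib_step k : fibN (S (S k)) = fibN (S k) + fibN k.
Proof. unfold fibN; simpl; destruct (fibL_pair k) as [[[a b] c] d]; simpl; ring. Qed.

Lemma luc_step k : lucN (S (S k)) = lucN (S k) + lucN k.
Proof. unfold lucN; simpl; destruct (fibL_pair k) as [[[a b] c] d]; simpl; ring. Qed.

Lemma luc_fib k : lucN (S k) = fibN k + fibN (S (S k)) /\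
                  lucN (S (S k)) = fibN (S k) + fibN (S (S (S k))).
Proof.
  induction k as [|k [IH1 IH2]].
  - split; reflexivity.
  - split; [exact IH2|].
    rewrite luc_step, IH1, IH2, (fib_step (S (S k))), (fib_step (S k)), (fib_step k). ring.
Qed.

Lemma F_pos m : 0 <= m -> F m = fibN (Z.to_nat m).
Proof. intros H; unfold F; destruct (Z.leb_spec 0 m); [reflexivity|lia]. Qed.

Lemma F_neg m : 0 <= m -> F (- m) = (-1) ^ (m + 1) * F m.
Proof.
  intros H. rewrite (F_pos m H). unfold F.
  destruct (Z.leb_spec 0 (-m)).
  - assert (m = 0) by lia. subst. reflexivity.
  - replace (- - m) with m by ring. replace (m + 1) with ((m - 1) + 2) by ring.
    rewrite (Z.pow_add_r _ (m-1) 2) by lia. ring.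
Qed.

Lemma F_rec_nat (k : nat) : F (Z.of_nat k + 2) = F (Z.of_nat k + 1) + F (Z.of_nat k).
Proof.
  rewrite !F_pos by lia.
  replace (Z.to_nat (Z.of_nat k + 2)) with (S (S k)) by lia.
  replace (Z.to_nat (Z.of_nat k + 1)) with (S k) by lia.
  rewrite Nat2Z.id. apply fib_step.
Qed.

Lemma F_rec_nonneg i : 0 <= i -> F (i + 2) = F (i + 1) + F i.
Proof.
  intros H. replace i with (Z.of_nat (Z.to_nat i)) by lia. apply F_rec_nat.
Qed.

Lemma F_rec i : F (i + 2) = F (i + 1) + F i.
Proof.
  destruct (Z.le_gt_cases 0 i) as [H|H]; [now apply F_rec_nonneg|].
  destruct (Z.eq_dec i (-1)) as [->|H1]; [reflexivity|].
  assert (Hj : 0 <= - i - 2) by lia.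
  remember (- i - 2) as j eqn:Ej.
  assert (Hi : i = - (j + 2)) by lia. subst i.
  replace (- (j + 2) + 2) with (- j) by ring.
  replace (- (j + 2) + 1) with (- (j + 1)) by ring.
  rewrite !F_neg by lia.
  pose proof (F_rec_nonneg j Hj) as R.
  replace (j + 1 + 1) with (j + 2) by ring.
  replace (j + 2 + 1) with (j + 3) by ring.
  rewrite R.
  rewrite (Z.pow_add_r _ j 2), (Z.pow_add_r _ j 3), (Z.pow_add_r _ j 1) by lia.
  ring.
Qed.

Lemma F_rec' i : F (i + 1) = F i + F (i - 1).
Proof. replace (i+1) with (i - 1 + 2) by ring. rewrite F_rec. f_equal; f_equal; ring. Qed.

Lemma L_pos m : 0 <= m -> L m = lucN (Z.to_nat m).
Proof. intros H; unfold L; destruct (Z.leb_spec 0 m); [reflexivity|lia]. Qed.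

Lemma L_F_nonneg m : 0 <= m -> L m = F (m - 1) + F (m + 1).
Proof.
  intros H. destruct (Z.eq_dec m 0) as [->|Hm]; [reflexivity|].
  rewrite L_pos, !F_pos by lia.
  replace (Z.to_nat m) with (S (Z.to_nat (m - 1))) by lia.
  replace (Z.to_nat (m + 1)) with (S (S (Z.to_nat (m - 1)))) by lia.
  apply luc_fib.
Qed.

Lemma L_F i : L i = F (i - 1) + F (i + 1).
Proof.
  destruct (Z.le_gt_cases 0 i) as [H|H]; [now apply L_F_nonneg|].
  set (m := - i). assert (Hm : 0 <= m) by lia.
  replace i with (- m) by lia.
  unfold L at 1. destruct (Z.leb_spec 0 (- m)); [lia|].
  replace (- - m) with m by ring.
  rewrite <- (L_pos m Hm), (L_F_nonneg m Hm).
  replace (- m - 1) with (- (m + 1)) by ring.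
  replace (- m + 1) with (- (m - 1)) by ring.
  rewrite !F_neg by lia.
  replace (m + 1 + 1) with (m + 2) by ring. replace (m - 1 + 1) with m by ring.
  rewrite (Z.pow_add_r _ m 2) by lia. ring.
Qed.

Lemma F_double n : F (2 * n + 1) = F n ^ 2 + F (n + 1) ^ 2 /\
                   F (2 * n + 2) = F (n + 1) * (2 * F n + F (n + 1)).
Proof.
  induction n using Z.peano_ind.
  - split; reflexivity.
  - destruct IHn as [H1 H2]. unfold Z.succ.
    assert (E1 : F (2 * (n + 1) + 1) = F (2*n+2) + F (2*n+1)).
    { replace (2 * (n + 1) + 1) with (2*n+1+2) by ring. rewrite F_rec. f_equal; f_equal; ring. }
    assert (E2 : F (2 * (n + 1) + 2) = F (2*n+1+2) + F (2*n+2)).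
    { replace (2 * (n + 1) + 2) with (2*n+2+2) by ring. rewrite F_rec. f_equal; f_equal; ring. }
    assert (E3 : F (2*n+1+2) = F (2*n+2) + F (2*n+1)).
    { rewrite F_rec. f_equal; f_equal; ring. }
    assert (E4 : F (n+1+1) = F (n+1) + F n).
    { replace (n+1+1) with (n+2) by ring. apply F_rec. }
    rewrite E1, E2, E3, E4, H1, H2. split; ring.
  - destruct IHn as [H1 H2]. unfold Z.pred.
    replace (n + -1 + 1) with n by ring.
    replace (2 * (n + -1) + 2) with (2 * n) by ring.
    replace (2 * (n + -1) + 1) with (2 * n - 1) by ring.
    assert (E1 : F (2*n+2) = F (2*n+1) + F (2*n)).
    { rewrite F_rec. f_equal; f_equal; ring. }
    assert (E2 : F (2*n+1) = F (2*n) + F (2*n-1)).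
    { apply F_rec'. }
    assert (E3 : F (n+1) = F n + F (n-1)) by apply F_rec'.
    assert (X : F (2*n) = F (n+1) * (2 * F n + F (n+1)) - F (2*n+1)) by lia.
    assert (Y : F (2*n-1) = F (2*n+1) - F (2*n)) by lia.
    replace (n + -1) with (n - 1) by ring. rewrite Y, X, H1, E3. split; ring.
Qed.

Lemma cassini n : (F (n+1) ^ 2 - F (n+1) * F n - F n ^ 2) ^ 2 = 1.
Proof.
  induction n using Z.peano_ind.
  - reflexivity.
  - unfold Z.succ. replace (n+1+1) with (n+2) by ring. rewrite F_rec.
    etransitivity; [|exact IHn]. ring.
  - unfold Z.pred. replace (n + -1 + 1) with n by ring.
    etransitivity; [|exact IHn]. rewrite (F_rec' n). replace (n + -1) with (n - 1) by ring. ring.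
Qed.

Lemma sum_from_last f a m : sum_from f a (S m) = sum_from f a m + f (a + Z.of_nat m).
Proof.
  revert a; induction m; intros a.
  - simpl. replace (a + 0) with a by ring. ring.
  - change (sum_from f a (S (S m))) with (f a + sum_from f (a+1) (S m)).
    rewrite IHm. simpl. replace (a + 1 + Z.of_nat m) with (a + Z.pos (Pos.of_succ_nat m)) by lia. ring.
Qed.

Lemma sumZ_diff f n : sumZ 1 n f - sumZ 1 (n - 1) f = f n.
Proof.
  unfold sumZ.
  destruct (Z.leb_spec (1-1) n); destruct (Z.leb_spec (1-1) (n-1)).
  - replace (Z.to_nat (n - 1 + 1)) with (S (Z.to_nat (n - 1 - 1 + 1))) by lia.
    rewrite sum_from_last. replace (1 + Z.of_nat (Z.to_nat (n - 1 - 1 + 1))) with n by lia. ring.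
  - assert (n = 0) by lia. subst. simpl. ring.
  - lia.
  - replace (Z.to_nat (1 - 1 - (n - 1))) with (S (Z.to_nat (1 - 1 - n))) by lia.
    simpl. replace (n - 1 + 1) with n by ring. ring.
Qed.

Definition RHS n := F (2 * n + 1) * L (n - 1) * L (n + 2) + 6 * n + 3.

Lemma RHS_diff n : RHS n - RHS (n - 1) = 25 * F n ^ 4.
Proof.
  unfold RHS.
  replace (2 * (n - 1) + 1) with (2 * (n - 1) + 1) by ring.
  destruct (F_double n) as [D1 _]. destruct (F_double (n-1)) as [D2 _].
  replace (n - 1 + 1) with n in D2 by ring.
  replace (n - 1 - 1) with (n - 2) by ring. replace (n - 1 + 2) with (n + 1) by ring.
  rewrite D1, D2, !L_F.
  replace (n - 1 - 1) with (n - 2) by ring. replace (n - 1 + 1) with n by ring.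
  replace (n + 2 - 1) with (n + 1) by ring. replace (n + 2 + 1) with (n + 3) by ring.
  replace (n - 2 - 1) with (n - 3) by ring. replace (n - 2 + 1) with (n - 1) by ring.
  replace (n + 1 - 1) with n by ring. replace (n + 1 + 1) with (n + 2) by ring.
  assert (A1 : F (n - 1) = F (n+1) - F n) by (rewrite (F_rec' n); ring).
  assert (A2' : F (n - 2) = F n - F (n - 1)).
  { pose proof (F_rec' (n-1)) as R. replace (n-1+1) with n in R by ring.
    replace (n-1-1) with (n-2) in R by ring. lia. }
  assert (A3 : F (n - 3) = F (n - 1) - F (n - 2)).
  { pose proof (F_rec' (n-2)) as R. replace (n-2+1) with (n-1) in R by ring.
    replace (n-2-1) with (n-3) in R by ring. lia. }
  assert (A4 : F (n + 2) = F (n+1) + F n) by apply F_rec.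
  assert (A5 : F (n + 3) = F (n+2) + F (n+1)).
  { replace (n+3) with (n+1+2) by ring. rewrite F_rec. f_equal; f_equal; ring. }
  rewrite A5, A3, A4, A2', A1.
  pose proof (cassini n) as C.
  set (a := F n) in *. set (b := F (n+1)) in *.
  nia.
Qed.

Theorem corollary1 (n : Z) :
  25 * sumZ 1 n (fun k => F k ^ 4) = F (2 * n + 1) * L (n - 1) * L (n + 2) + 6 * n + 3.
Proof.
  change (25 * sumZ 1 n (fun k => F k ^ 4) = RHS n).
  induction n using Z.peano_ind.
  - reflexivity.
  - unfold Z.succ. pose proof (RHS_diff (n+1)) as R. pose proof (sumZ_diff (fun k => F k ^ 4) (n+1)) as S.
    replace (n+1-1) with n in R, S by ring. cbv beta in S. lia.
  - unfold Z.pred. pose proof (RHS_diff n) as R. pose proof (sumZ_diff (fun k => F k ^ 4) n) as S.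
    replace (n + -1) with (n-1) by ring. cbv beta in S. lia.
Qed.
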